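(* Let $M$ and $N$ be compact metric spaces, $f\colon M\to M$ and $g\colon N\to N$ homeomorphisms, and $q\colon M\to N$ a continuous, surjective, open map with $q\circ f=g\circ q$. If $f$ has the L-shadowing property, then $g$ has the L-shadowing property.
   Context: A homeomorphism $f$ of a compact metric space $(X,d)$ has the L-shadowing property if for every $\varepsilon>0$ there is $\delta>0$ such that every sequence $(x_k)_{k\in\mathbb{Z}}$ with $d(f(x_k),x_{k+1})\le\delta$ for all $k$ and $d(f(x_k),x_{k+1})\to0$ as $|k|\to\infty$ admits $z$ with $d(f^k(z),x_k)\le\varepsilon$ for all $k$ and $d(f^k(z),x_k)\to0$ as $|k|\to\infty$. *)

(* Defs.v *)
From Stdlib Require Import Reals ZArith List.
Open Scope R_scope.

Record is_metric {X : Type} (d : X -> X -> R) : Prop := {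
  dist_nonneg : forall x y, 0 <= d x y;
  dist_eq0 : forall x y, d x y = 0 <-> x = y;
  dist_sym : forall x y, d x y = d y x;
  dist_tri : forall x y z, d x z <= d x y + d y z
}.

Definition seq_conv {X : Type} (d : X -> X -> R) (u : nat -> X) (l : X) : Prop :=
  forall eps, 0 < eps -> exists N : nat, forall n, (N <= n)%nat -> d (u n) l < eps.

Definition is_open {X : Type} (d : X -> X -> R) (U : X -> Prop) : Prop :=
  forall x, U x -> exists r, 0 < r /\ forall y, d x y < r -> U y.

Definition compact_metric {X : Type} (d : X -> X -> R) : Prop :=
  forall (I : Type) (U : I -> X -> Prop),
    (forall i, is_open d (U i)) ->
    (forall x, exists i, U i x) ->
    exists l : list I, forall x, exists i, List.In i l /\ U i x.

Definition continuous_map {X Y : Type} (dX : X -> X -> R) (dY : Y -> Y -> R)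
  (f : X -> Y) : Prop :=
  forall x eps, 0 < eps -> exists delta, 0 < delta /\
    forall y, dX x y < delta -> dY (f x) (f y) < eps.

Definition homeomorphism {X : Type} (d : X -> X -> R) (f : X -> X) : Prop :=
  continuous_map d d f /\
  exists g : X -> X, continuous_map d d g /\
    (forall x, g (f x) = x) /\ (forall x, f (g x) = x).

Definition open_map {X Y : Type} (dX : X -> X -> R) (dY : Y -> Y -> R)
  (q : X -> Y) : Prop :=
  forall U : X -> Prop, is_open dX U ->
    is_open dY (fun y => exists x, U x /\ q x = y).

Definition tends_to_zero_Z (a : Z -> R) : Prop :=
  forall eps, 0 < eps -> exists K : Z, forall k, (K <= Z.abs k)%Z -> Rabs (a k) < eps.

(* For a bijection f, the full orbit of z is the unique y : Z -> X with
   y 0 = z and f (y k) = y (k+1) for all k, i.e. y k = f^k z. *)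
Definition L_shadowing {X : Type} (d : X -> X -> R) (f : X -> X) : Prop :=
  forall eps, 0 < eps -> exists delta, 0 < delta /\
    forall x : Z -> X,
      (forall k, d (f (x k)) (x (k + 1)%Z) <= delta) ->
      tends_to_zero_Z (fun k => d (f (x k)) (x (k + 1)%Z)) ->
      exists y : Z -> X,
        (forall k, f (y k) = y (k + 1)%Z) /\
        (forall k, d (y k) (x k) <= eps) /\
        tends_to_zero_Z (fun k => d (y k) (x k)).

(* Main.v *)
From Stdlib Require Import Reals ZArith List Lia Lra Classical ClassicalEpsilon.
Require Import Defs.
Open Scope R_scope.

Lemma ball_open {X} (d : X -> X -> R) x r : is_metric d -> is_open d (fun z => d x z < r).
Proof.
  intros Hm z Hz. exists (r - d x z). split; [lra|].
  intros w Hw. pose proof (dist_tri d Hm x z w). lra.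
Qed.

Lemma cover_lemma {X} (d : X -> X -> R) (rho : X -> R) :
  is_metric d -> compact_metric d -> (forall x, 0 < rho x) ->
  exists eta, 0 < eta /\ forall z, exists x, d x z < rho x /\ eta <= rho x.
Proof.
  intros Hm Hc Hr.
  destruct (Hc X (fun x z => d x z < rho x)) as [l Hl].
  - intro x. apply ball_open; auto.
  - intro x. exists x. destruct (dist_eq0 d Hm x x) as [_ H]. rewrite H; auto.
  - exists (fold_right (fun x acc => Rmin (rho x) acc) 1 l). split.
    + clear Hl. induction l; simpl; [lra|]. apply Rmin_pos; auto.
    + intro z. destruct (Hl z) as [x [Hin Hx]]. exists x. split; auto.
      clear Hl Hx. induction l; simpl in *; [contradiction|].
      destruct Hin as [<-|Hin].
      * apply Rmin_l.
      * eapply Rle_trans; [apply Rmin_r|]. auto.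
Qed.

Lemma unif_cont {X Y} (dX : X -> X -> R) (dY : Y -> Y -> R) (h : X -> Y) :
  is_metric dX -> is_metric dY -> compact_metric dX -> continuous_map dX dY h ->
  forall eps, 0 < eps -> exists del, 0 < del /\
    forall a b, dX a b < del -> dY (h a) (h b) < eps.
Proof.
  intros HX HY Hc Hh eps He.
  assert (Hs : forall x, {s | 0 < s /\ forall y, dX x y < s -> dY (h x) (h y) < eps/2}).
  { intro x. apply constructive_indefinite_description. apply Hh. lra. }
  destruct (cover_lemma dX (fun x => proj1_sig (Hs x) / 2) HX Hc) as [eta [Heta H]].
  { intro x. destruct (proj2_sig (Hs x)) as [Hs1 _]. simpl. lra. }
  exists eta. split; auto. intros a b Hab.
  destruct (H a) as [x [H1 H2]]. destruct (Hs x) as [s [Hs1 Hs2]]. simpl in *.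
  pose proof (dist_tri dX HX x a b).
  pose proof (Hs2 a ltac:(lra)). pose proof (Hs2 b ltac:(lra)).
  pose proof (dist_tri dY HY (h a) (h x) (h b)).
  rewrite (dist_sym dY HY (h a) (h x)) in *. lra.
Qed.

Lemma unif_open {M N} (dM : M -> M -> R) (dN : N -> N -> R) (q : M -> N) :
  is_metric dM -> is_metric dN -> compact_metric dM -> continuous_map dM dN q ->
  open_map dM dN q ->
  forall gam, 0 < gam -> exists eta, 0 < eta /\
    forall z y', dN (q z) y' < eta -> exists x', q x' = y' /\ dM z x' < gam.
Proof.
  intros HM HN Hc Hq Ho gam Hg.
  assert (Hr : forall x, {r | 0 < r /\ forall y, dN (q x) y < r ->
             exists x', dM x x' < gam/2 /\ q x' = y}).
  { intro x. apply constructive_indefinite_description.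
    destruct (Ho (fun z => dM x z < gam/2) (ball_open dM x _ HM) (q x)) as [r [Hr1 Hr2]].
    { exists x. split; auto. destruct (dist_eq0 dM HM x x) as [_ H]. rewrite H; auto; lra. }
    exists r. split; auto. }
  assert (Hs : forall x, {s | 0 < s /\ forall y, dM x y < s -> dN (q x) (q y) < proj1_sig (Hr x)/2}).
  { intro x. apply constructive_indefinite_description. apply Hq.
    destruct (proj2_sig (Hr x)) as [? ?]; simpl; lra. }
  destruct (cover_lemma dM (fun x => Rmin (proj1_sig (Hr x) / 2) (Rmin (proj1_sig (Hs x)) (gam/2))) HM Hc)
    as [eta [Heta H]].
  { intro x. destruct (proj2_sig (Hr x)) as [? _]; destruct (proj2_sig (Hs x)) as [? _]; simpl.
    repeat apply Rmin_pos; lra. }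
  exists eta. split; auto. intros z y' Hzy.
  destruct (H z) as [x [H1 H2]].
  destruct (Hs x) as [s [Hs1 Hs2]]. destruct (Hr x) as [r [Hr1 Hr2]]. simpl in *.
  pose proof (Rmin_l (r/2) (Rmin s (gam/2))). pose proof (Rmin_r (r/2) (Rmin s (gam/2))).
  pose proof (Rmin_l s (gam/2)). pose proof (Rmin_r s (gam/2)).
  pose proof (Hs2 z ltac:(lra)).
  pose proof (dist_tri dN HN (q x) (q z) y').
  destruct (Hr2 y' ltac:(lra)) as [x' [Hx' Hqx']].
  exists x'. split; auto.
  pose proof (dist_tri dM HM z x x'). rewrite (dist_sym dM HM z x) in *. lra.
Qed.

Lemma inv_S_pos n : 0 < / INR (S n).
Proof. apply Rinv_0_lt_compat. apply lt_0_INR. lia. Qed.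

Lemma inv_S_le m n : (m <= n)%nat -> / INR (S n) <= / INR (S m).
Proof. intros H. apply Rinv_le_contravar. apply lt_0_INR; lia. apply le_INR; lia. Qed.

Lemma lift_exists {M N} (dM : M -> M -> R) (dN : N -> N -> R) (q : M -> N) :
  is_metric dM -> is_metric dN -> continuous_map dM dN q ->
  (forall y : N, exists x : M, q x = y) ->
  forall x y', exists x', q x' = y' /\ forall n,
    (exists x'', q x'' = y' /\ dM x x'' < / INR (S n)) -> dM x x' < / INR (S n).
Proof.
  intros HM HN Hq Hs x y'.
  set (S0 := fun n => exists x'', q x'' = y' /\ dM x x'' < / INR (S n)).
  assert (Hdown : forall n m, S0 n -> (m <= n)%nat -> S0 m).
  { intros n m [x'' [H1 H2]] Hmn. exists x''. split; auto.
    pose proof (inv_S_le m n Hmn). lra. }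
  destruct (classic (forall n, S0 n)) as [Hall|Hnot].
  - assert (q x = y').
    { destruct (classic (q x = y')) as [?|Hne]; auto.
      assert (He : 0 < dN (q x) y').
      { destruct (dist_nonneg dN HN (q x) y') as [?|He]; auto.
        exfalso. apply Hne. apply (dist_eq0 dN HN). auto. }
      destruct (Hq x _ He) as [del [Hdel Hc]].
      destruct (archimed_cor1 del Hdel) as [N0 [HN0 HN0']].
      destruct (Hall N0) as [x'' [H1 H2]].
      pose proof (inv_S_le (pred N0) N0 ltac:(lia)).
      replace (S (pred N0)) with N0 in H by lia.
      pose proof (Hc x'' ltac:(lra)). rewrite H1 in H0. lra. }
    exists x. split; auto. intros n _.
    destruct (dist_eq0 dM HM x x) as [_ Hz]. rewrite Hz; auto. apply inv_S_pos.
  - apply not_all_ex_not in Hnot. destruct Hnot as [m Hm].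
    induction m as [|m IH].
    + destruct (Hs y') as [x' Hx']. exists x'. split; auto.
      intros n Hn. exfalso. apply Hm. apply (Hdown n); [auto|lia].
    + destruct (classic (S0 m)) as [Hsm|Hsm]; [|exact (IH Hsm)].
      destruct Hsm as [x' [H1 H2]]. exists x'. split; auto.
      intros n Hn. assert (n <= m)%nat.
      { destruct (Nat.le_gt_cases n m); auto. exfalso. apply Hm.
        apply (Hdown n); [auto|lia]. }
      pose proof (inv_S_le n m H). lra.
Qed.

Fixpoint iter_seq {X} (step : nat -> X -> X) (x0 : X) (n : nat) : X :=
  match n with O => x0 | S m => step m (iter_seq step x0 m) end.

Definition zseq {X} (F B : nat -> X) (k : Z) : X :=
  match k with Z0 => F O | Zpos p => F (Pos.to_nat p) | Zneg p => B (Pos.to_nat p) end.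

Lemma zseq_pos {X} (F B : nat -> X) n : zseq F B (Z.of_nat n) = F n.
Proof. destruct n; simpl; auto. rewrite SuccNat2Pos.id_succ. auto. Qed.

Lemma zseq_neg {X} (F B : nat -> X) n : F O = B O -> zseq F B (- Z.of_nat n)%Z = B n.
Proof. intros H. destruct n; simpl; auto. rewrite SuccNat2Pos.id_succ. auto. Qed.

Lemma Z_cases k : (exists n, k = Z.of_nat n) \/ (exists n, k = (- Z.of_nat (S n))%Z).
Proof.
  destruct (Z_le_gt_dec 0 k).
  - left. exists (Z.to_nat k). rewrite Z2Nat.id; lia.
  - right. exists (Z.to_nat (- k - 1)). rewrite Nat2Z.inj_succ, Z2Nat.id; lia.
Qed.

Theorem mainTheorem15 (M N : Type) (dM : M -> M -> R) (dN : N -> N -> R)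
  (f : M -> M) (g : N -> N) (q : M -> N) :
  is_metric dM -> is_metric dN ->
  compact_metric dM -> compact_metric dN ->
  homeomorphism dM f -> homeomorphism dN g ->
  continuous_map dM dN q ->
  (forall y : N, exists x : M, q x = y) ->
  open_map dM dN q ->
  (forall x : M, q (f x) = g (q x)) ->
  L_shadowing dM f -> L_shadowing dN g.
Proof.
  intros HM HN cM cN [fc [fi [fic [fif ffi]]]] [gc [gi [gic [gig ggi]]]] qc qs qo qe Lsh.
  assert (qfi : forall x, q (fi x) = gi (q x)).
  { intro x. rewrite <- (gig (q (fi x))), <- qe, ffi. auto. }
  assert (HL : forall x y', {x' | q x' = y' /\ forall n,
    (exists x'', q x'' = y' /\ dM x x'' < / INR (S n)) -> dM x x' < / INR (S n)}).
  { intros x y'. apply constructive_indefinite_description. apply (lift_exists dM dN q); auto. }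
  set (Lf := fun x y' => proj1_sig (HL x y')).
  assert (qLf : forall x y', q (Lf x y') = y').
  { intros x y'. exact (proj1 (proj2_sig (HL x y'))). }
  assert (Lsmall : forall gam, 0 < gam -> exists eta, 0 < eta /\
     forall x y', dN (q x) y' < eta -> dM x (Lf x y') < gam).
  { intros gam Hg. destruct (archimed_cor1 gam Hg) as [n [Hn Hn0]].
    pose proof (inv_S_le (pred n) n ltac:(lia)).
    replace (S (pred n)) with n in H by lia.
    destruct (unif_open dM dN q HM HN cM qc qo (/ INR (S n)) (inv_S_pos n)) as [eta [He Hu]].
    exists eta. split; auto. intros x y' Hxy.
    pose proof (proj2 (proj2_sig (HL x y')) n (Hu x y' Hxy)). unfold Lf. lra. }
  assert (comb : forall gam, 0 < gam -> exists eta, 0 < eta /\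
     (forall a y', dN (g (q a)) y' < eta -> dM (f a) (Lf (f a) y') < gam) /\
     (forall b y', dN (g y') (q b) < eta -> dM (f (Lf (fi b) y')) b < gam)).
  { intros gam Hg.
    destruct (Lsmall gam Hg) as [e1 [He1 H1]].
    destruct (unif_cont dM dM f HM HM cM fc gam Hg) as [g2 [Hg2 Hf2]].
    destruct (Lsmall g2 Hg2) as [e2 [He2 H2]].
    destruct (unif_cont dN dN gi HN HN cN gic e2 He2) as [e3 [He3 H3]].
    exists (Rmin e1 e3). split; [apply Rmin_pos; auto|]. split.
    - intros a y' H. apply H1. rewrite qe. pose proof (Rmin_l e1 e3). lra.
    - intros b y' H. pose proof (Rmin_r e1 e3).
      pose proof (H3 (g y') (q b) ltac:(lra)). rewrite gig, <- qfi in H4.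
      rewrite (dist_sym dN HN) in H4. pose proof (H2 _ _ H4).
      pose proof (Hf2 _ _ H5). rewrite ffi in H6. rewrite (dist_sym dM HM). auto. }
  intros eps Heps.
  destruct (unif_cont dM dN q HM HN cM qc eps Heps) as [e1 [He1 Hq]].
  destruct (Lsh (e1/2) ltac:(lra)) as [d1 [Hd1 Hsh]].
  destruct (comb d1 Hd1) as [eta0 [Heta0 [Hf0 Hb0]]].
  exists (eta0/2). split; [lra|]. intros y Hy Hyt.
  destruct (qs (y 0%Z)) as [p0 Hp0].
  set (F := iter_seq (fun m p => Lf (f p) (y (Z.of_nat (S m)))) p0).
  set (B := iter_seq (fun m p => Lf (fi p) (y (- Z.of_nat (S m))%Z)) p0).
  set (p := zseq F B).
  assert (qF : forall n, q (F n) = y (Z.of_nat n)).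
  { intro n; destruct n; simpl; auto. apply qLf. }
  assert (qB : forall n, q (B n) = y (- Z.of_nat n)%Z).
  { intro n; destruct n; simpl; auto. apply qLf. }
  assert (qp : forall k, q (p k) = y k).
  { intro k. destruct (Z_cases k) as [[n ->]|[n ->]]; unfold p.
    - rewrite zseq_pos. auto.
    - rewrite zseq_neg; auto. }
  assert (step : forall k gam eta,
     (forall a y', dN (g (q a)) y' < eta -> dM (f a) (Lf (f a) y') < gam) ->
     (forall b y', dN (g y') (q b) < eta -> dM (f (Lf (fi b) y')) b < gam) ->
     dN (g (y k)) (y (k+1)%Z) < eta -> dM (f (p k)) (p (k+1)%Z) < gam).
  { intros k gam eta Hfw Hbw H.
    destruct (Z_cases k) as [[n ->]|[n ->]]; unfold p.
    - replace (Z.of_nat n + 1)%Z with (Z.of_nat (S n)) in * by lia.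
      rewrite !zseq_pos. simpl. apply Hfw. fold F. rewrite qF.
      exact H.
    - replace (- Z.of_nat (S n) + 1)%Z with (- Z.of_nat n)%Z in * by lia.
      rewrite !zseq_neg; auto. simpl. fold B. apply Hbw. rewrite qB. auto. }
  destruct (Hsh p) as [z [Hz1 [Hz2 Hz3]]].
  - intro k. left. apply (step k d1 eta0); auto. pose proof (Hy k). lra.
  - intros e He. destruct (comb e He) as [eta [Heta [Hfw Hbw]]].
    destruct (Hyt eta Heta) as [K HK]. exists K. intros k Hk.
    pose proof (HK k Hk). simpl in H.
    rewrite Rabs_pos_eq in H by apply (dist_nonneg dN HN).
    rewrite Rabs_pos_eq by apply (dist_nonneg dM HM).
    apply (step k e eta); auto.
  - exists (fun k => q (z k)). split; [|split].
    + intro k. rewrite <- qe, Hz1. auto.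
    + intro k. rewrite <- qp. left. apply Hq. pose proof (Hz2 k). lra.
    + intros e He. destruct (unif_cont dM dN q HM HN cM qc e He) as [e2 [He2 Hq2]].
      destruct (Hz3 e2 He2) as [K HK]. exists K. intros k Hk.
      pose proof (HK k Hk). simpl in *.
      rewrite Rabs_pos_eq in H by apply (dist_nonneg dM HM).
      rewrite Rabs_pos_eq by apply (dist_nonneg dN HN).
      rewrite <- qp. apply Hq2. auto.
Qed.
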